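(* For all constraint sets $C,\tilde C$ and substitutions $\sigma,\sigma_{\tilde c}$: if $C\to^{\sigma}\tilde C$ and $\sigma_{\tilde c}\vdash_{\min}\tilde C$, then $\sigma\oplus\sigma_{\tilde c}\vdash_{\min} C$.
   Context: There are two binding times $\mathsf{S}$, $\mathsf{D}$; $\mathcal{L}$ is a finite set of labels disjoint from them. A binding-time expression is a binding time or a label; a constraint is a formal pair $B_1\preceq B_2$; a constraint set is a finite set of constraints, with $\mathrm{labels}(C)=\{l\in\mathcal{L}:\exists B.\ l\preceq B\in C\text{ or }B\preceq l\in C\}$. Satisfaction $\vdash b_1\preceq b_2$ holds exactly for $\mathsf{S}\preceq\mathsf{D}$, $\mathsf{S}\preceq\mathsf{S}$, $\mathsf{D}\preceq\mathsf{D}$. A substitution is a finite partial map $\sigma:\mathcal{L}\rightharpoonup\{\mathsf{S},\mathsf{D}\}$, extended to binding-time expressions as the identity on binding times and on labels outside its domain; $\sigma(C)=\{\sigma(B_1)\preceq\sigma(B_2): B_1\preceq B_2\in C\}$. The extension $\sigma\oplus\hat\sigma$ has domain $\mathrm{dom}(\sigma)\cup\mathrm{dom}(\hat\sigma)$ and maps $l$ to $\sigma(l)$ if $l\in\mathrm{dom}(\sigma)$, else to $\hat\sigma(l)$. $\sigma\vdash C$ means: for every $B_1\preceq B_2\in C$, $\sigma(B_1),\sigma(B_2)$ are binding times and $\vdash\sigma(B_1)\preceq\sigma(B_2)$. $\sigma_c\vdash_{\min}C$ means: $\sigma_c\vdash C$, $\mathrm{dom}(\sigma_c)=\mathrm{labels}(C)$,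 and for every $\sigma\vdash C$ and $l\in\mathrm{labels}(C)$, $\vdash\sigma_c(l)\preceq\sigma(l)$. Write $[\,]$ for the empty substitution and $[l\mapsto b]$ for the substitution with domain $\{l\}$. The normalization relation $C\to^{\sigma}\tilde C$ holds if $C=C_0\uplus\{c\}$ and one of: (a) $c=\mathsf{S}\preceq\mathsf{S}$, $\sigma=[\,]$, $\tilde C=C_0$; (b) $c=\mathsf{S}\preceq\mathsf{D}$, $\sigma=[\,]$, $\tilde C=C_0$; (c) $c=\mathsf{D}\preceq\mathsf{D}$, $\sigma=[\,]$, $\tilde C=C_0$; (d) $c=l\preceq\mathsf{S}$ with $l\in\mathcal{L}$, $\sigma=[l\mapsto\mathsf{S}]$, $\tilde C=[l\mapsto\mathsf{S}](C_0)$; (e) $c=\mathsf{D}\preceq l$ with $l\in\mathcal{L}$, $\sigma=[l\mapsto\mathsf{D}]$, $\tilde C=[l\mapsto\mathsf{D}](C_0)$. *)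

(* Defs.v *)
From mathcomp Require Import all_boot.
From Stdlib Require Import List.
Set Implicit Arguments. Unset Strict Implicit. Unset Printing Implicit Defensive.

Inductive bt := BS | BD.

Inductive bexpr (L : Type) := BT (b : bt) | Lab (l : L).
Arguments BT {L} b.
Arguments Lab {L} l.

(* A constraint B1 <= B2 is a pair; a constraint set is a finite set,
   represented by a list read up to set equality. *)
Definition constr (L : Type) := (bexpr L * bexpr L)%type.
Definition cset (L : Type) := list (constr L).

Definition set_eq (L : Type) (C1 C2 : cset L) : Prop :=
  forall x, In x C1 <-> In x C2.

Definition labels_in (L : Type) (C : cset L) (l : L) : Prop :=
  exists B, In (Lab l, B) C \/ In (B, Lab l) C.

Definition bt_le (b1 b2 : bt) : Prop :=
  match b1, b2 with
  | BS, BD | BS, BS | BD, BD => True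
  | BD, BS => False
  end.

Definition subst (L : Type) := L -> option bt.

Definition empty_subst (L : Type) : subst L := fun _ => None.
Definition single_subst (L : eqType) (l : L) (b : bt) : subst L :=
  fun l' => if l' == l then Some b else None.

Definition apply_subst (L : Type) (s : subst L) (B : bexpr L) : bexpr L :=
  match B with
  | BT b => BT b
  | Lab l => match s l with Some b => BT b | None => Lab l end
  end.

Definition subst_cset (L : Type) (s : subst L) (C : cset L) : cset L :=
  map (fun c => (apply_subst s c.1, apply_subst s c.2)) C.

Definition oplus (L : Type) (s s' : subst L) : subst L :=
  fun l => match s l with Some b => Some b | None => s' l end.

Definition bexpr_le (L : Type) (B1 B2 : bexpr L) : Prop :=
  match B1, B2 with
  | BT b1, BT b2 => bt_le b1 b2
  | _, _ => False
  end.

Definition sat (L : Type) (s : subst L) (C : cset L) : Prop :=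
  forall B1 B2, In (B1, B2) C -> bexpr_le (apply_subst s B1) (apply_subst s B2).

Definition sat_min (L : Type) (sc : subst L) (C : cset L) : Prop :=
  sat sc C /\
  (forall l, sc l <> None <-> labels_in C l) /\
  (forall s, sat s C -> forall l, labels_in C l ->
     bexpr_le (apply_subst sc (Lab l)) (apply_subst s (Lab l))).

(* Normalization step C ->^sigma Ct, with C = C0 (disjoint union) {c}. *)
Definition norm_step (L : eqType) (C : cset L) (s : subst L) (Ct : cset L) : Prop :=
  exists (C0 : cset L) (c : constr L),
    set_eq C (c :: C0) /\ ~ In c C0 /\
    ( (c = (BT BS, BT BS) /\ s = @empty_subst L /\ set_eq Ct C0)
   \/ (c = (BT BS, BT BD) /\ s = @empty_subst L /\ set_eq Ct C0)
   \/ (c = (BT BD, BT BD) /\ s = @empty_subst L /\ set_eq Ct C0)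
   \/ (exists l, c = (Lab l, BT BS) /\ s = single_subst l BS /\
                 set_eq Ct (subst_cset (single_subst l BS) C0))
   \/ (exists l, c = (BT BD, Lab l) /\ s = single_subst l BD /\
                 set_eq Ct (subst_cset (single_subst l BD) C0)) ).

(* Main.v *)
Require Import Defs.
From mathcomp Require Import all_boot.
From Stdlib Require Import List.

Lemma apply_oplus (L : Type) (s t : subst L) B :
  apply_subst (oplus s t) B = apply_subst t (apply_subst s B).
Proof. case: B => [b|l] //=; rewrite /oplus; by case: (s l). Qed.

Lemma subst_empty (L : Type) (C : cset L) : subst_cset (@empty_subst L) C = C.
Proof. elim: C => [|[a b] C IH] //=; rewrite IH; by case: a; case: b. Qed.

Lemma labels_subst (L : Type) (s : subst L) C m :
  labels_in (subst_cset s C) m <-> labels_in C m /\ s m = None.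
Proof.
  split.
  - move=> [B [H|H]]; move/in_map_iff: H => [[B1 B2] [E HI]]; case: E => E1 E2.
    + move: E1; case: B1 HI => [b|l] HI //=; case E: (s l) => [b|] //= [<-].
      by split=> //; exists B2; left.
    + move: E2; case: B2 HI => [b|l] HI //=; case E: (s l) => [b|] //= [<-].
      by split=> //; exists B1; right.
  - move=> [[B [H|H]] E].
    + exists (apply_subst s B); left; apply/in_map_iff; exists (Lab m, B); by rewrite /= E.
    + exists (apply_subst s B); right; apply/in_map_iff; exists (B, Lab m); by rewrite /= E.
Qed.

Lemma generic (L : Type) (C C0 Ct : cset L) (c : constr L) (s sct : subst L) :
  set_eq C (c :: C0) -> set_eq Ct (subst_cset s C0) ->
  bexpr_le (apply_subst s c.1) (apply_subst s c.2) ->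
  (forall σ : subst L, bexpr_le (apply_subst σ c.1) (apply_subst σ c.2) ->
     forall l b, s l = Some b -> σ l = Some b) ->
  (forall l, s l <> None <-> labels_in (c :: nil) l) ->
  sat_min sct Ct -> sat_min (oplus s sct) C.
Proof.
  case: c => c1 c2 /=; set c := (c1, c2).
  move=> HC HCt H1 H2 H34 [Hs [Hd Hm]].
  have inC : forall x, In x C -> x = c \/ In x C0.
    by move=> x /HC [->|?]; [left|right].
  have labC : forall m, labels_in C m -> labels_in (c::nil) m \/ labels_in C0 m.
    move=> m [B [H|H]]; case: (inC _ H) => [E|H'].
    - by left; exists B; left; rewrite E; left; reflexivity.
    - by right; exists B; left.
    - by left; exists B; right; rewrite E; left; reflexivity.
    - by right; exists B; right.
  have labC' : forall m, labels_in (c::nil) m \/ labels_in C0 m -> labels_in C m.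
    move=> m [[B [[H|[]]|[H|[]]]]|[B [H|H]]].
    - by exists B; left; apply/HC; left.
    - by exists B; right; apply/HC; left.
    - by exists B; left; apply/HC; right.
    - by exists B; right; apply/HC; right.
  have labCt : forall m, labels_in Ct m <-> labels_in C0 m /\ s m = None.
    move=> m; rewrite -labels_subst; split; move=> [B [H|H]]; exists B;
      [left|right|left|right]; by apply/HCt.
  have satCt : forall σ : subst L, sat σ C -> sat σ Ct.
    move=> σ Hσ B1 B2 /HCt /in_map_iff [[A1 A2] [E HI]]; case: E => <- <-.
    have Hc := Hσ _ _ (proj2 (HC _) (or_introl (erefl c))).
    have Hσs : forall A, apply_subst σ (apply_subst s A) = apply_subst σ A.
      case=> [b|l] //=; case E: (s l) => [b|] //=.
      by rewrite (H2 σ Hc l b E).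
    by rewrite !Hσs; apply: Hσ; apply/HC; right.
  split; [|split].
  - move=> B1 B2 /inC [E|HI]; rewrite !apply_oplus.
    + case: E => -> ->; move: H1.
      case: (apply_subst s c1) => [b1|?] //=; case: (apply_subst s c2) => [b2|?] //=.
    + apply: Hs; apply/HCt; apply/in_map_iff; by exists (B1, B2).
  - move=> l; rewrite /oplus; split.
    + case E: (s l) => [b|] H.
      * by apply: labC'; left; apply/H34; rewrite E.
      * apply: labC'; right; by case: (proj1 (labCt l) (proj1 (Hd l) H)).
    + move=> /labC [H|H].
      * by case E: (s l) (proj2 (H34 l) H).
      * case E: (s l) => [b|] //; apply/Hd; by apply/labCt.
  - move=> σ Hσ m Hm'; rewrite /= /oplus.
    case E: (s m) => [b|].
    + have Hc := Hσ _ _ (proj2 (HC _) (or_introl (erefl c))).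
      rewrite (H2 σ Hc m b E) /=; by case: b {E}.
    + have Hl : labels_in Ct m.
        apply/labCt; split=> //; case: (labC _ Hm') => // /H34; by rewrite E.
      by have := Hm σ (satCt σ Hσ) m Hl; rewrite /=.
Qed.

Theorem lemma10 (L : finType) (C Ct : cset L) (s sct : subst L) :
  norm_step C s Ct -> sat_min sct Ct -> sat_min (oplus s sct) C.
Proof.
  move=> [C0 [c [HC [_ H]]]].
  case: H => [[Ec [Es HCt]]|[[Ec [Es HCt]]|[[Ec [Es HCt]]|[[l [Ec [Es HCt]]]|[l [Ec [Es HCt]]]]]]];
    subst s c.
  1-3: (apply: (@generic _ C C0 Ct _ (@empty_subst L) sct HC); [by move=> x; rewrite subst_empty| by [] | by [] | ]);
    move=> l; split => //; move=> [B [[H|[]]|[H|[]]]] //.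
  - apply: (@generic _ C C0 Ct _ _ sct HC HCt) => /=.
    + by rewrite /single_subst eqxx.
    + move=> σ; case E: (σ l) => [[]|] //= _ l' b; rewrite /single_subst.
      by case: eqP => // -> [<-].
    + move=> l'; rewrite /single_subst; split.
      * by case: eqP => // -> _; exists (BT BS); left; left.
      * move=> [B [[[-> _]|[]]|[H|[]]]] //; by rewrite eqxx.
  - apply: (@generic _ C C0 Ct _ _ sct HC HCt) => /=.
    + by rewrite /single_subst eqxx.
    + move=> σ; case E: (σ l) => [[]|] //= _ l' b; rewrite /single_subst.
      by case: eqP => // -> [<-].
    + move=> l'; rewrite /single_subst; split.
      * by case: eqP => // -> _; exists (BT BD); right; left.
      * move=> [B [[H|[]]|[[_ ->]|[]]]] //; by rewrite eqxx.
Qed.
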